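(* Let $L$ be a code loop with basis $\mathcal{B}=\{a_1,\dots,a_n\}$ and let $f$ be a half-automorphism of $L$. Then $\{f(a_1),\dots,f(a_n)\}$ is a basis of $L$, and its characteristic vector coincides with the characteristic vector of $L$ related to $\mathcal{B}$.
   Context: A code loop is a finite Moufang loop (loop satisfying $(x\cdot zx)y=x(z\cdot xy)$) with a unique nontrivial square, denoted $-1$; squares, commutators and associators of a code loop lie in $\{1,-1\}\subseteq Z(L)$. The commutator $[x,y]$ and associator $(x,y,z)$ are defined by $xy=(yx)[x,y]$ and $(xy)z=(x(yz))(x,y,z)$. A basis of a code loop is a minimal generating set; its size is the rank. A half-automorphism of $L$ is a bijection $f:L\to L$ with $f(xy)\in\{f(x)f(y),f(y)f(x)\}$ for all $x,y$. For a basis $\{a_1,\dots,a_n\}$ the characteristic vector is $(\lambda_1,\dots,\lambda_n,\lambda_{1,2},\dots,\lambda_{n-1,n},\lambda_{1,2,3},\dots,\lambda_{n-2,n-1,n})$ with entries in $\{0,1\}$ determined by $a_i^2=(-1)^{\lambda_i}$, $[a_i,a_j]=(-1)^{\lambda_{i,j}}$ ($i<j$), $(a_i,a_j,a_k)=(-1)^{\lambda_{i,j,k}}$ ($i<j<k$). *)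

(* Defs.v *)
From mathcomp Require Import all_boot all_order.
Set Implicit Arguments. Unset Strict Implicit. Unset Printing Implicit Defensive.

Section Loops.
Variables (T : finType) (mul : T -> T -> T) (e : T).

(* (T, mul, e) is a loop: e is a two-sided identity and all left and right
   translations are bijections (injective = bijective on a finite type). *)
Definition is_loop : Prop :=
  (forall x, mul e x = x /\ mul x e = x) /\
  (forall a, injective (mul a)) /\ (forall a, injective (fun x => mul x a)).

Definition moufang : Prop :=
  forall x y z, mul (mul x (mul z x)) y = mul x (mul z (mul x y)).

Definition ldiv (a b : T) : T := odflt e [pick c | mul a c == b].
Definition rdiv (b a : T) : T := odflt e [pick c | mul c a == b].

Definition commutator (x y : T) : T := ldiv (mul y x) (mul x y).
Definition associator (x y z : T) : T :=
  ldiv (mul x (mul y z)) (mul (mul x y) z).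

Definition central (c : T) : Prop :=
  forall x y, mul c x = mul x c /\
    mul (mul c x) y = mul c (mul x y) /\
    mul (mul x c) y = mul x (mul c y) /\
    mul (mul x y) c = mul x (mul y c).

(* Code loop: finite Moufang loop with a unique nontrivial square m (= -1);
   squares, commutators and associators lie in {e, m}, which is central. *)
Definition code_loop (m : T) : Prop :=
  is_loop /\ moufang /\ m <> e /\ (exists x, mul x x = m) /\
  (forall x, mul x x = e \/ mul x x = m) /\
  (forall x y, commutator x y = e \/ commutator x y = m) /\
  (forall x y z, associator x y z = e \/ associator x y z = m) /\
  central e /\ central m.

Definition subloop (A : {set T}) : bool :=
  [&& e \in A,
      [forall x in A, forall y in A, mul x y \in A],
      [forall x in A, forall y in A, ldiv x y \in A] &
      [forall x in A, forall y in A, rdiv x y \in A]].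

Definition gen (S : {set T}) : {set T} :=
  \bigcap_(A | subloop A && (S \subset A)) A.

Definition is_basis (n : nat) (a : 'I_n -> T) : Prop :=
  [/\ injective a,
      gen [set a i | i : 'I_n] = setT &
      forall B : {set T}, B \proper [set a i | i : 'I_n] -> gen B != setT].

Definition half_aut (f : T -> T) : Prop :=
  bijective f /\
  forall x y, f (mul x y) = mul (f x) (f y) \/ f (mul x y) = mul (f y) (f x).

(* entries of the characteristic vector of a w.r.t. -1 = m (as booleans:
   true = 1, false = 0) *)
Definition char_sq (m : T) n (a : 'I_n -> T) (i : 'I_n) : bool :=
  mul (a i) (a i) == m.
Definition char_comm (m : T) n (a : 'I_n -> T) (i j : 'I_n) : bool :=
  commutator (a i) (a j) == m.
Definition char_assoc (m : T) n (a : 'I_n -> T) (i j k : 'I_n) : bool :=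
  associator (a i) (a j) (a k) == m.

Definition same_charvec (m : T) n (a b : 'I_n -> T) : Prop :=
  (forall i, char_sq m a i = char_sq m b i) /\
  (forall i j : 'I_n, i < j -> char_comm m a i j = char_comm m b i j) /\
  (forall i j k : 'I_n, i < j -> j < k ->
      char_assoc m a i j k = char_assoc m b i j k).

End Loops.

(* Main.v *)
Require Import Defs.
From mathcomp Require Import all_boot all_order.
From mathcomp Require fingroup perm.
Module Inv.
Import fingroup perm.
Lemma iter_id (T : finType) (f : T -> T) : injective f -> exists k, forall x, iter k.+1 f x = x.
Proof.
move=> inj; set p := perm inj.
exists (#[p].-1)%g => x.
rewrite prednK ?order_gt0 //.
have H := permX p x #[p]%g; rewrite expg_order perm1 in H.
have E : f =1 p by move=> y; rewrite permE.
by rewrite {2}H (eq_iter E).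
Qed.
End Inv.

Section CL.
Variables (T : finType) (mul : T -> T -> T) (e m : T).
Hypothesis CL : code_loop mul e m.

Lemma mul1 x : mul e x = x. Proof. by case: CL => [[H _] _]; case: (H x). Qed.
Lemma mulr1 x : mul x e = x. Proof. by case: CL => [[H _] _]; case: (H x). Qed.
Lemma injL a : injective (mul a). Proof. by case: CL => [[_ [H _]] _]. Qed.
Lemma injR a : injective (fun x => mul x a). Proof. by case: CL => [[_ [_ H]] _]. Qed.
Lemma mouf : moufang mul. Proof. by case: CL => [_ [H _]]. Qed.
Lemma me : m <> e. Proof. by case: CL => [_ [_ [H _]]]. Qed.
Lemma sqm : exists x, mul x x = m. Proof. by case: CL => [_ [_ [_ [H _]]]]. Qed.
Lemma sq2 x : mul x x = e \/ mul x x = m. Proof. by case: CL => [_ [_ [_ [_ [H _]]]]]. Qed.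
Lemma comm2 x y : commutator mul e x y = e \/ commutator mul e x y = m.
Proof. by case: CL => [_ [_ [_ [_ [_ [H _]]]]]]. Qed.
Lemma assoc2 x y z : associator mul e x y z = e \/ associator mul e x y z = m.
Proof. by case: CL => [_ [_ [_ [_ [_ [_ [H _]]]]]]]. Qed.
Lemma centE : central mul e. Proof. by case: CL => [_ [_ [_ [_ [_ [_ [_ [H _]]]]]]]]. Qed.
Lemma centM : central mul m. Proof. by case: CL => [_ [_ [_ [_ [_ [_ [_ [_ H]]]]]]]]. Qed.

Lemma ldivP a b : mul a (ldiv mul e a b) = b.
Proof.
rewrite /ldiv; case: pickP => [c /eqP //|H]; exfalso.
have [g _ gK] := injF_bij (injL a).
by move: (H (g b)); rewrite gK eqxx.
Qed.
Lemma ldiv_uniq a b c : mul a c = b -> ldiv mul e a b = c.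
Proof. by move=> H; apply: (injL a); rewrite ldivP. Qed.
Lemma rdivP b a : mul (rdiv mul e b a) a = b.
Proof.
rewrite /rdiv; case: pickP => [c /eqP //|H]; exfalso.
have [g _ gK] := injF_bij (injR a).
by move: (H (g b)); rewrite gK eqxx.
Qed.
Lemma rdiv_uniq a b c : mul c a = b -> rdiv mul e b a = c.
Proof. by move=> H; apply: (injR a); rewrite /= rdivP. Qed.

Definition cb (b : bool) := if b then m else e.
Lemma centcb b : central mul (cb b). Proof. by case: b; [exact: centM | exact: centE]. Qed.

Lemma cA1 c x y : central mul c -> mul (mul x c) y = mul (mul x y) c.
Proof. by move=> H; case: (H x y) => _ [_ [-> ->]]; case: (H y x) => ->. Qed.
Lemma cA2 c x y : central mul c -> mul x (mul y c) = mul (mul x y) c.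
Proof. by move=> H; case: (H x y) => _ [_ [_ ->]]. Qed.
Lemma cA3 c x y : central mul c -> mul (mul c x) y = mul c (mul x y).
Proof. by move=> H; case: (H x y) => _ [->]. Qed.

Lemma mm : mul m m = e.
Proof.
case: (sq2 m) => // H; exfalso; apply: me; apply: (injL m).
by rewrite H mulr1.
Qed.
Lemma mulcbA x b1 b2 : mul (mul x (cb b1)) (cb b2) = mul x (cb (b1 (+) b2)).
Proof.
rewrite -cA2; last exact: centcb.
by case: b1; case: b2; rewrite /= ?mm ?mulr1 ?mul1.
Qed.
Lemma cb_inj x b1 b2 : mul x (cb b1) = mul x (cb b2) -> b1 = b2.
Proof.
move/injL; case: b1; case: b2 => //= H; exfalso; apply: me => //.
Qed.
Lemma eqm_e : (e == m) = false.
Proof. by apply/eqP => H; apply: me. Qed.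

Lemma commP x y : mul (mul y x) (cb (commutator mul e x y == m)) = mul x y.
Proof.
have H : mul (mul y x) (commutator mul e x y) = mul x y := ldivP _ _.
by case: (comm2 x y) => E; rewrite E in H *; rewrite /= ?eqxx ?eqm_e.
Qed.
Lemma comm_uniq x y b : mul (mul y x) (cb b) = mul x y -> (commutator mul e x y == m) = b.
Proof. by move=> H; apply: (@cb_inj (mul y x)); rewrite commP H. Qed.
Lemma assocP x y z :
  mul (mul x (mul y z)) (cb (associator mul e x y z == m)) = mul (mul x y) z.
Proof.
have H : mul (mul x (mul y z)) (associator mul e x y z) = mul (mul x y) z := ldivP _ _.
by case: (assoc2 x y z) => E; rewrite E in H *; rewrite /= ?eqxx ?eqm_e.
Qed.

Lemma leftalt x w : mul x (mul x w) = mul (mul x x) w.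
Proof. by have := mouf x w e; rewrite !mul1. Qed.

Lemma sqcent x : central mul (mul x x).
Proof. by case: (sq2 x) => ->; [exact: centE | exact: centM]. Qed.

Lemma key x y z : (associator mul e x y z == m) =
  (commutator mul e z x == m) (+) (commutator mul e z y == m)
  (+) (commutator mul e z (mul x y) == m).
Proof.
set k1 := commutator mul e z x == m.
set k2 := commutator mul e z y == m.
set k3 := commutator mul e z (mul x y) == m.
set a := associator mul e x y z == m.
have M := mouf x y z.
set s := mul x x.
have Hs := sqcent x.
have L : mul (mul x (mul z x)) y = mul (mul s (mul y z)) (cb (k2 (+) k1)).
  rewrite -(commP z x) -/k1 (cA2 _ _ _ (centcb _)) (cA1 _ _ _ (centcb _)) leftalt -/s.
  rewrite (cA3 _ _ _ Hs) -(commP z y) -/k2 (cA2 _ _ _ (centcb _)).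
  by rewrite mulcbA.
have R : mul x (mul z (mul x y)) = mul (mul s (mul y z)) (cb (a (+) k3)).
  rewrite -(commP z (mul x y)) -/k3 -(assocP x y z) -/a mulcbA.
  by rewrite (cA2 _ _ _ (centcb _)) leftalt.
rewrite L R in M; move: (cb_inj _ _ _ M); clear L R M.
by case: a; case: k1; case: k2; case: k3.
Qed.

Definition hp (g : T -> T) :=
  forall x y, g (mul x y) = mul (g x) (g y) \/ g (mul x y) = mul (g y) (g x).

Lemma g_e g : hp g -> g e = e.
Proof.
move=> H; have E : g e = mul (g e) (g e).
  by rewrite -{1}(mul1 e); case: (H e e).
by apply: (injL (g e)); rewrite -E mulr1.
Qed.
Lemma g_sq g x : hp g -> g (mul x x) = mul (g x) (g x).
Proof. by move=> H; case: (H x x). Qed.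
Lemma g_m g : hp g -> injective g -> g m = m.
Proof.
move=> H inj; have [t Ht] := sqm.
have := g_sq g t H; rewrite Ht => E.
case: (sq2 (g t)) => E'; last by rewrite E E'.
by exfalso; apply: me; apply: inj; rewrite (g_e g H) E E'.
Qed.
Lemma g_mulm g x : hp g -> injective g -> g (mul x m) = mul (g x) m.
Proof.
move=> H inj.
case: (H x m) => ->; rewrite (g_m g H inj) //.
by case: (centM (g x) e) => ->.
Qed.

Lemma cp1 (g : T -> T) x y : hp g -> injective g ->
  commutator mul e x y == m -> commutator mul e (g x) (g y) == m.
Proof.
move=> H inj Hc.
have E : mul (mul y x) m = mul x y by have := commP x y; rewrite Hc.
have E2 : g (mul x y) = mul (g (mul y x)) m by rewrite -E g_mulm.
have contra X : X = mul X m -> False.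
  by move=> F; apply: me; apply: (injL X); rewrite -F mulr1.
case: (H y x) => E3; rewrite E3 in E2; case: (H x y) => E4; rewrite E4 in E2.
- by apply: comm_uniq.
- by case: (contra _ E2).
- by case: (contra _ E2).
- apply: comm_uniq; rewrite E2 /= -(cA2 _ _ _ centM) mm mulr1 //.
Qed.

Lemma hp_iter (g : T -> T) k : hp g -> hp (iter k g).
Proof.
move=> H; elim: k => [|k IH] x y /=; first by left.
by case: (IH x y) => ->; [case: (H (iter k g x) (iter k g y)) | case: (H (iter k g y) (iter k g x))] => ->; auto.
Qed.
Lemma inj_iter (g : T -> T) k : injective g -> injective (iter k g).
Proof.
move=> H; elim: k => [|k IH] //= x y /H; exact: IH.
Qed.

Lemma inv_ex (g : T -> T) : hp g -> injective g ->
  exists h, [/\ hp h, injective h, forall x, h (g x) = x & forall x, g (h x) = x].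
Proof.
move=> H inj; have [k Hk] := @Inv.iter_id _ g inj.
exists (iter k g); split.
- exact: hp_iter.
- exact: inj_iter.
- by move=> x; rewrite -iterSr.
- by move=> x; rewrite -iterS.
Qed.

Lemma cp (g : T -> T) x y : hp g -> injective g ->
  (commutator mul e (g x) (g y) == m) = (commutator mul e x y == m).
Proof.
move=> H inj; have [h [Hh ih hg _]] := inv_ex g H inj.
apply/idP/idP; last exact: (cp1 g x y H inj).
by move=> C; have := cp1 h _ _ Hh ih C; rewrite !hg.
Qed.

Lemma comm_cb a b k : (commutator mul e a (mul b (cb k)) == m) = (commutator mul e a b == m).
Proof.
apply: comm_uniq.
by rewrite (cA1 _ _ _ (centcb k)) (cA2 _ _ _ (centcb k)) -(commP a b) !mulcbA addbC.
Qed.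

Lemma ap (g : T -> T) x y z : hp g -> injective g ->
  (associator mul e (g x) (g y) (g z) == m) = (associator mul e x y z == m).
Proof.
move=> H inj; rewrite !key !(cp g _ _ H inj).
congr (_ (+) _).
have -> : (commutator mul e (g z) (mul (g x) (g y)) == m) =
          (commutator mul e (g z) (g (mul x y)) == m).
  case: (H x y) => -> //.
  by rewrite -(commP (g y) (g x)) comm_cb.
by rewrite (cp g _ _ H inj).
Qed.

Lemma subloop_pre (g : T -> T) (A : {set T}) : hp g -> subloop mul e A ->
  subloop mul e [set y | g y \in A].
Proof.
move=> H /and4P [eA mulA ldA rdA].
have MA x y : x \in A -> y \in A -> mul x y \in A.
  by move=> xA yA; move/forall_inP: mulA => /(_ x xA) /forall_inP; apply.
have LA x y : x \in A -> y \in A -> ldiv mul e x y \in A.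
  by move=> xA yA; move/forall_inP: ldA => /(_ x xA) /forall_inP; apply.
have RA x y : x \in A -> y \in A -> rdiv mul e x y \in A.
  by move=> xA yA; move/forall_inP: rdA => /(_ x xA) /forall_inP; apply.
apply/and4P; split.
- by rewrite inE (g_e g H).
- apply/forall_inP => x; rewrite inE => gx; apply/forall_inP => y; rewrite inE => gy.
  by rewrite inE; case: (H x y) => ->; apply: MA.
- apply/forall_inP => x; rewrite inE => gx; apply/forall_inP => y; rewrite inE => gy.
  rewrite inE; have E := ldivP x y; move: (ldiv mul e x y) E => c E.
  have := H x c; rewrite E; case=> F.
  + by rewrite -(ldiv_uniq _ _ _ (esym F)); apply: LA.
  + by rewrite -(rdiv_uniq _ _ _ (esym F)); apply: RA.
- apply/forall_inP => x; rewrite inE => gx; apply/forall_inP => y; rewrite inE => gy.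
  rewrite inE; have E := rdivP x y; move: (rdiv mul e x y) E => c E.
  have := H c y; rewrite E; case=> F.
  + by rewrite -(rdiv_uniq _ _ _ (esym F)); apply: RA.
  + by rewrite -(ldiv_uniq _ _ _ (esym F)); apply: LA.
Qed.

Lemma gen_transfer (g : T -> T) (S S' : {set T}) : hp g ->
  (forall x, exists y, g y = x) -> (forall y, y \in S' -> g y \in S) ->
  gen mul e S' = setT -> gen mul e S = setT.
Proof.
move=> H surj sub HS'; apply/setP => x; rewrite in_setT.
apply/bigcapP => A /andP [sA SA].
have [y <-] := surj x.
have : y \in gen mul e S' by rewrite HS' in_setT.
move/bigcapP => /(_ [set y | g y \in A]); rewrite inE; apply.
rewrite subloop_pre //=; apply/subsetP => z zS; rewrite inE.
by apply: (subsetP SA); apply: sub.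
Qed.
Lemma main_lem (n : nat) (a : 'I_n -> T)
    (Ba : is_basis mul e a) (f : T -> T) (Hf : half_aut mul f) :
  is_basis mul e (fun i => f (a i)) /\
  same_charvec mul e m (fun i => f (a i)) a.
Proof.
case: Hf => fbij fhp.
have finj := bij_inj fbij.
have fsurj : forall x, exists y, f y = x.
  by case: fbij => g _ gK x; exists (g x); rewrite gK.
have [h [hhp hinj hf fh]] := inv_ex f fhp finj.
case: Ba => ainj agen amin.
split; last split; [|move=> i|split].
- split.
  + by move=> i j /finj /ainj.
  + apply: (gen_transfer f _ _ fhp fsurj _ agen) => y /imsetP [i _ ->].
    by apply/imsetP; exists i.
  + move=> B /properP [sB [x /imsetP [i _ ->] nB]].
    apply/negP => /eqP HB.
    have HB' : gen mul e (h @: B) = setT.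
      apply: (gen_transfer h _ _ hhp _ _ HB).
      - by move=> z; exists (f z).
      - by move=> y yB; apply/imsetP; exists y.
    have : h @: B \proper [set a i | i : 'I_n].
      apply/properP; split.
      - apply/subsetP => y /imsetP [b bB ->].
        have /imsetP [j _ ->] := subsetP sB b bB.
        by rewrite hf; apply/imsetP; exists j.
      - exists (a i); first by apply/imsetP; exists i.
        apply/imsetP => [[b bB E]]; move/negP: nB; apply.
        by rewrite E fh.
    by move/amin; rewrite HB' eqxx.
- rewrite /char_sq -(g_sq f (a i) fhp).
  case: (sq2 (a i)) => ->; first by rewrite (g_e f fhp) !eqm_e.
  by rewrite (g_m f fhp finj) eqxx.
- by move=> i j _; rewrite /char_comm (cp f _ _ fhp finj).
- by move=> i j k _ _; rewrite /char_assoc (ap f _ _ _ fhp finj).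
Qed.
End CL.

Theorem corollary2p7 (T : finType) (mul : T -> T -> T) (e m : T)
    (CL : code_loop mul e m) (n : nat) (a : 'I_n -> T)
    (Ba : is_basis mul e a) (f : T -> T) (Hf : half_aut mul f) :
  is_basis mul e (fun i => f (a i)) /\
  same_charvec mul e m (fun i => f (a i)) a.
Proof. exact: (@main_lem T mul e m CL n a Ba f Hf). Qed.
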